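(* Let $K$ be a field, $X$ a finite connected poset, and $\varphi$ a Lie automorphism of $I(X,K)$. There exist a bijection $\theta:B\to B$ with $\theta(B_i)\subseteq B_i$ for all $i\ge1$ and a map $\sigma:X^2_<\to K^*$ such that $\widetilde\varphi(e_{xy})=\sigma(x,y)\theta(e_{xy})$ for every $e_{xy}\in B$.
   Context: $I(X,K)$ is the incidence algebra: functions $f:X\times X\to K$ with $f(x,y)=0$ unless $x\le y$, product $(fg)(x,y)=\sum_{x\le t\le y}f(x,t)g(t,y)$; $e_{xy}$ ($x\le y$) is the basis element equal to $1$ at $(x,y)$ and $0$ elsewhere. A Lie automorphism is a bijective linear map preserving $[f,g]=fg-gf$. $B=\{e_{xy}:x<y\}$, $X^2_<=\{(x,y):x<y\}$. Let $l(\lfloor x,y\rfloor)$ be the maximum length of a chain in $\{z:x\le z\le y\}$; $B_i=\{e_{xy}\in B: l(\lfloor x,y\rfloor)\ge i\}$; $L_i=\mathrm{span}_K\{e_{xy}: l(\lfloor x,y\rfloor)=i\}$ ($i\ge0$). $\widetilde\varphi$ is the linear map sending $e_{xy}\in L_i$ to the $L_i$-component of $\varphi(e_{xy})$ in $I(X,K)=\bigoplus_iL_i$. Connected means any two elements are joined by a sequence in which consecutive elements are in a covering relation. *)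

(* Defs.v *)
From HB Require Import structures.
From mathcomp Require Import all_boot all_order all_algebra.
Set Implicit Arguments. Unset Strict Implicit. Unset Printing Implicit Defensive.
Import Order.TTheory GRing.Theory.
Local Open Scope order_scope.

Section Incidence.
Variables (d : Order.disp_t) (X : finPOrderType d) (K : fieldType).

(* Elements of I(X,K) are functions X -> X -> K vanishing outside x <= y. *)
Definition inI (f : X -> X -> K) : Prop := forall x y, ~~ (x <= y) -> f x y = 0%R.

Definition imul (f g : X -> X -> K) : X -> X -> K :=
  fun x y => (\sum_(t : X | ((x <= t) && (t <= y))%O) f x t * g t y)%R.

Definition ibracket (f g : X -> X -> K) : X -> X -> K :=
  fun x y => (imul f g x y - imul g f x y)%R.

Definition e (x y : X) : X -> X -> K :=
  fun u v => if (u == x) && (v == y) then 1%R else 0%R.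

Definition lie_automorphism (phi : (X -> X -> K) -> (X -> X -> K)) : Prop :=
  [/\ (forall f, inI f -> inI (phi f)),
      (forall (c : K) f g, inI f -> inI g ->
         forall u v, phi (fun a b => c * f a b + g a b)%R u v
                     = (c * phi f u v + phi g u v)%R),
      (forall f g, inI f -> inI g -> (forall u v, phi f u v = phi g u v) ->
         forall u v, f u v = g u v),
      (forall g, inI g -> exists2 f, inI f & forall u v, phi f u v = g u v)
    & (forall f g, inI f -> inI g ->
         forall u v, phi (ibracket f g) u v = ibracket (phi f) (phi g) u v)].

Definition is_chain (C : {set X}) : bool :=
  [forall a in C, forall b in C, (a <= b) || (b <= a)].

Definition ilen (x y : X) : nat :=
  (\max_(C : {set X} | (C \subset [set z | ((x <= z) && (z <= y))%O]) && is_chain C)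
     #|C|.-1)%N.

Definition Lcomp (i : nat) (f : X -> X -> K) : X -> X -> K :=
  fun u v => if ilen u v == i then f u v else 0%R.

(* tilde phi on a basis element e_xy (x <= y), with e_xy in L_{l(x,y)} *)
Definition phi_tilde (phi : (X -> X -> K) -> (X -> X -> K)) (x y : X)
  : X -> X -> K := Lcomp (ilen x y) (phi (e x y)).

Definition covers (a b : X) : bool := (a < b) && [forall c, ~~ ((a < c) && (c < b))].

Definition connected_poset : Prop :=
  forall x y : X, exists s : seq X,
    path (fun a b => covers a b || covers b a) x s && (last x s == y).

End Incidence.

(* Main.v *)
Require Import Defs.
From HB Require Import structures.
From mathcomp Require Import all_boot all_order all_algebra zify.
From Stdlib Require Import FunctionalExtensionality ClassicalEpsilon.
Set Implicit Arguments. Unset Strict Implicit. Unset Printing Implicit Defensive.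
Import Order.TTheory GRing.Theory.
Local Open Scope order_scope.

Section L.
Variables (d : Order.disp_t) (X : finPOrderType d) (K : fieldType).

Definition itv (x y : X) := [set z | ((x <= z) && (z <= y))%O].

Lemma ilen_ge (x y : X) (C : {set X}) :
  C \subset itv x y -> is_chain C -> (#|C|.-1 <= ilen x y)%N.
Proof. by move=> s c; rewrite /ilen; apply: (leq_bigmax_cond C); rewrite s c. Qed.

Lemma ilen_attain (x y : X) : exists C : {set X},
  [/\ C \subset itv x y, is_chain C & ilen x y = #|C|.-1].
Proof.
have P0 : (set0 \subset itv x y) && is_chain (set0 : {set X}).
  by rewrite sub0set; apply/forall_inP => a; rewrite in_set0.
rewrite /ilen (bigop.bigmax_eq_arg set0 P0).
case: arg_maxnP => // C /andP[s c] _; by exists C.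
Qed.

Lemma ilen_lt (x y : X) : x < y -> (1 <= ilen x y)%N.
Proof.
move=> lt; have := ilen_ge (C := [set x; y]).
rewrite cards2 (lt_eqF lt) /=; apply.
  apply/subsetP => z; rewrite !inE => /orP[]/eqP->; rewrite lexx ?(ltW lt) //.
apply/forall_inP => a; rewrite !inE => ha; apply/forall_inP => b; rewrite !inE => hb.
by case/orP: ha => /eqP->; case/orP: hb => /eqP->; rewrite ?lexx ?(ltW lt) ?orbT.
Qed.

Lemma ilen_pos_lt (x y : X) : (0 < ilen x y)%N -> x < y.
Proof.
move=> pos; apply/negPn/negP => nlt; move: pos; rewrite lt0n => /negP; apply.
rewrite -leqn0; apply/bigmax_leqP => C /andP[/subsetP s _].
have : C \subset [set x].
  apply/subsetP => z zC; have := s z zC; rewrite !inE => /andP[xz zy].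
  have xy : x <= y by apply: le_trans zy.
  move: nlt; rewrite lt_neqAle xy andbT negbK => /eqP exy.
  by move: zy; rewrite -exy => zy; rewrite eq_le xz zy.
by move/subset_leq_card; rewrite cards1; case: #|C| => [|[]].
Qed.

Lemma ilen_add (p t q : X) : p <= t -> t <= q ->
  (ilen p t + ilen t q <= ilen p q)%N.
Proof.
move=> pt tq.
have [C1 [s1 c1 ->]] := ilen_attain p t.
have [C2 [s2 c2 ->]] := ilen_attain t q.
have hs : C1 :|: C2 \subset itv p q.
  apply/subsetP => z; rewrite inE => /orP[] zC.
    move: (subsetP s1 z zC); rewrite !inE => /andP[-> zt] /=; exact: le_trans tq.
  move: (subsetP s2 z zC); rewrite !inE => /andP[tz ->]; rewrite andbT; exact: le_trans tz.
have hc : is_chain (C1 :|: C2).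
  apply/forall_inP => a; rewrite inE => ha; apply/forall_inP => b; rewrite inE => hb.
  case/orP: ha => ha; case/orP: hb => hb.
  - by move/forall_inP: c1 => /(_ a ha) /forall_inP /(_ b hb).
  - move: (subsetP s1 a ha) (subsetP s2 b hb); rewrite !inE => /andP[_ at'] /andP[tb _].
    by rewrite (le_trans at' tb).
  - move: (subsetP s1 b hb) (subsetP s2 a ha); rewrite !inE => /andP[_ bt] /andP[ta _].
    by rewrite (le_trans bt ta) orbT.
  - by move/forall_inP: c2 => /(_ a ha) /forall_inP /(_ b hb).
have := ilen_ge hs hc.
have hI : (#|C1 :&: C2| <= 1)%N.
  rewrite -(cards1 t); apply: subset_leq_card; apply/subsetP => z; rewrite !inE => /andP[z1 z2].
  move: (subsetP s1 z z1) (subsetP s2 z z2); rewrite !inE => /andP[_ zt] /andP[tz _].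
  by rewrite eq_le zt tz.
have hU := cardsUI C1 C2.
have h1 : (#|C1| <= #|C1 :|: C2|)%N by apply: subset_leq_card; apply: subsetUl.
have h2 : (#|C2| <= #|C1 :|: C2|)%N by apply: subset_leq_card; apply: subsetUr.
move=> h; lia.
Qed.


Lemma ilen_split (x y : X) (k : nat) : (1 <= k)%N -> (k.+1 <= ilen x y)%N ->
  exists z, [/\ x <= z, z < y & (k <= ilen x z)%N].
Proof.
move=> k1 hk; have [C [s c hC]] := ilen_attain x y.
set C' := C :\ y.
have cC' : (k.+1 <= #|C'|)%N.
  have := cardsD1 y C; rewrite -/C'; have : ((y \in C) <= 1)%N by case: (y \in C).
  move: (nat_of_bool (y \in C)) => b; lia.
have [z0 z0C] : exists z0, z0 \in C'.
  by apply/set0Pn; rewrite -card_gt0; lia.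
pose F z := #|[set w in C' | w <= z]|.
case: (arg_maxnP F z0C) => z zC0 zmax; have zC' : z \in C' := zC0.
have zC : z \in C by move: zC'; rewrite /C' !inE => /andP[].
have all_le : forall w, w \in C' -> w <= z.
  move=> w wC'; have wC : w \in C by move: wC'; rewrite /C' !inE => /andP[].
  move/forall_inP: c => /(_ w wC) /forall_inP /(_ z zC) /orP[] // zw.
  apply/negPn/negP => nwz.
  have := zmax w wC'; rewrite /F.
  suff : (#|[set w0 in C' | (w0 <= z)%O]| < #|[set w0 in C' | (w0 <= w)%O]|)%N by lia.
  apply: proper_card; apply/properP; split.
    apply/subsetP => a; rewrite /C' !inE => /andP[-> az] /=; exact: le_trans zw.
  exists w; rewrite /C' !inE; move: wC'; rewrite /C' !inE => /andP[-> ->]; by rewrite /= ?lexx ?(negbTE nwz).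
exists z; split.
- by move: (subsetP s z zC); rewrite inE => /andP[].
- move: (subsetP s z zC) zC'; rewrite /C' !inE => /andP[_ zy] /andP[zny _].
  by rewrite lt_neqAle zny.
- have : C' \subset itv x z.
    apply/subsetP => w wC'; rewrite inE all_le // andbT.
    have wC : w \in C by move: wC'; rewrite /C' !inE => /andP[].
    by move: (subsetP s w wC); rewrite inE => /andP[].
  move/ilen_ge => /(_ _) h.
  have : is_chain C'.
    apply/forall_inP => a; rewrite /C' inE => /andP[_ aC]; apply/forall_inP => b; rewrite inE => /andP[_ bC].
    by move/forall_inP: c => /(_ a aC) /forall_inP /(_ b bC).
  move/h; lia.
Qed.


Local Open Scope ring_scope.
Implicit Types (f g : X -> X -> K).

Lemma e_inI (x y : X) : (x <= y)%O -> inI (e K x y).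
Proof.
move=> xy u v; rewrite /e; case: eqP => [->|] //=; case: eqP => [->|] //=.
by rewrite xy.
Qed.

Lemma imul_e (a b c w u v : X) : imul (e K a b) (e K c w) u v =
  if [&& u == a, v == w, b == c, (a <= b)%O & (b <= w)%O] then 1 else 0.
Proof.
rewrite /imul (eq_bigr (fun t => if t == b then e K a b u b * e K c w b v else 0)); last first.
  move=> t _; case: eqP => [->//|/eqP tb]; by rewrite /e (negbTE tb) andbF mul0r.
case Pb: ((u <= b)%O && (b <= v)%O).
  rewrite (bigD1 b) //= eqxx big1 ?addr0; last by move=> t /andP[_ /negbTE ->].
  rewrite /e eqxx andbT.
  case: (u =P a) => [ua|] /=; last by rewrite mul0r.
  case: (b =P c) => [bc|] /=; rewrite ?andbF ?mulr0 //.
  case: (v =P w) => [vw|] /=; rewrite ?andbF ?mulr0 //.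
  by move: Pb; rewrite -ua -vw => /andP[-> ->]; rewrite mulr1.
rewrite big1; last by move=> t Pt; case: eqP Pt => // ->; rewrite Pb.
case: (eqVneq u a) => [ua|] //=; case: (eqVneq v w) => [vd|] //=.
by case: (b == c) => //=; move: Pb; rewrite ua vd => ->.
Qed.

Lemma bracket_e_chain (x z y : X) : (x <= z)%O -> (z <= y)%O -> x != y ->
  ibracket (e K x z) (e K z y) = e K x y.
Proof.
move=> xz zy xy; apply: functional_extensionality => u; apply: functional_extensionality => v.
have yx : (y == x) = false by rewrite eq_sym (negbTE xy).
rewrite /ibracket !imul_e /e eqxx xz zy yx !andbF andbT subr0.
by case: (u == x); case: (v == y).
Qed.

Lemma bracket_e_diag (x u v : X) : (u <= v)%O ->
  ibracket (e K x x) (e K u v) = fun a b => ((x == u)%:R - (x == v)%:R) * e K u v a b.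
Proof.
move=> uv; apply: functional_extensionality => a; apply: functional_extensionality => b.
rewrite /ibracket !imul_e /e lexx uv.
case: (x =P u) => [xu|/eqP xu]; case: (x =P v) => [xv|/eqP xv].
- subst u v; by rewrite eqxx !subrr mul0r.
- subst u; have vx : (v == x) = false by rewrite eq_sym (negbTE xv).
  rewrite ?eqxx ?(negbTE xv) ?vx !andbF /= ?mulr1n ?mulr0n !subr0 mul1r.
  by rewrite uv andbT.
- subst v; have ux : (u == x) = false by rewrite eq_sym (negbTE xu).
  rewrite ?eqxx ?(negbTE xu) ?ux !andbF /= ?mulr1n ?mulr0n ?subr0 ?sub0r mulN1r.
  by rewrite lexx andbT.
- have vx : (v == x) = false by rewrite eq_sym (negbTE xv).
  by rewrite ?(negbTE xu) ?(negbTE xv) ?vx !andbF /= ?mulr0n ?subr0 ?subrr mul0r.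
Qed.



Lemma inI_imul f g : inI (imul f g).
Proof.
move=> u v nuv; rewrite /imul big1 // => t /andP[ut tv].
by move: nuv; rewrite (le_trans ut tv).
Qed.

Lemma inI_ibracket f g : inI (ibracket f g).
Proof. by move=> u v nuv; rewrite /ibracket !inI_imul // subrr. Qed.

Lemma imul_diag f g p : imul f g p p = f p p * g p p.
Proof.
rewrite /imul (bigD1 p) ?lexx //= big1 ?addr0 // => t /andP[/andP[pt tp] tnp].
by move: tnp; rewrite eq_le pt tp.
Qed.

Lemma ibracket_diag f g p : ibracket f g p p = 0.
Proof. by rewrite /ibracket !imul_diag mulrC subrr. Qed.

Definition Jk (k : nat) f := forall p q, (ilen p q < k)%N -> f p q = 0.

Lemma imul_J a b f g : Jk a f -> Jk b g -> Jk (a + b) (imul f g).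
Proof.
move=> Jf Jg p q hpq; rewrite /imul big1 // => t /andP[pt tq].
have := ilen_add pt tq.
case: (ltnP (ilen p t) a) => ha; first by rewrite Jf // mul0r.
case: (ltnP (ilen t q) b) => hb; first by rewrite Jg // mulr0.
lia.
Qed.

Lemma ibracket_J a b f g : Jk a f -> Jk b g -> Jk (a + b) (ibracket f g).
Proof.
move=> Jf Jg p q hpq; rewrite /ibracket (imul_J Jf Jg) // (imul_J Jg Jf) ?subrr //.
by rewrite addnC.
Qed.

Lemma inI_sum (I : Type) (s : seq I) (P : pred I) (c : I -> K) (F : I -> X -> X -> K) :
  (forall i, P i -> inI (F i)) -> inI (fun a b => \sum_(i <- s | P i) c i * F i a b).
Proof.
move=> hF u v nuv; rewrite big1 // => i Pi; by rewrite hF // mulr0.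
Qed.

Lemma expand f : inI f ->
  f = fun a b => \sum_(pq : X * X | (pq.1 <= pq.2)%O) f pq.1 pq.2 * e K pq.1 pq.2 a b.
Proof.
move=> hf; apply: functional_extensionality => a; apply: functional_extensionality => b.
case ab: (a <= b)%O.
  rewrite (bigD1 (a, b)) //= /e !eqxx mulr1 big1 ?addr0 // => [[p q]] /andP[_ ne] /=.
  case: (eqVneq a p) => [ap|]; case: (eqVneq b q) => [bq|] //=; rewrite ?mulr0 //.
  by move: ne; rewrite ap bq eqxx.
rewrite hf ?ab // big1 // => [[p q]] /= pq; rewrite /e.
case: (eqVneq a p) => [ap|]; case: (eqVneq b q) => [bq|] //=; rewrite ?mulr0 //.
by move: ab; rewrite ap bq pq.
Qed.

Section Phi.
Variable phi : (X -> X -> K) -> (X -> X -> K).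
Hypothesis Hphi : lie_automorphism phi.

Lemma phi_inI f : inI f -> inI (phi f).
Proof. case: Hphi => H1 H2 H3 H4 H5; exact: H1. Qed.
Lemma phi_lin c f g : inI f -> inI g ->
  forall u v, phi (fun a b => c * f a b + g a b) u v = c * phi f u v + phi g u v.
Proof. case: Hphi => H1 H2 H3 H4 H5; exact: H2. Qed.
Lemma phi_inj f g : inI f -> inI g -> (forall u v, phi f u v = phi g u v) ->
  forall u v, f u v = g u v.
Proof. case: Hphi => H1 H2 H3 H4 H5; exact: H3. Qed.
Lemma phi_surj g : inI g -> exists2 f, inI f & forall u v, phi f u v = g u v.
Proof. case: Hphi => H1 H2 H3 H4 H5; exact: H4. Qed.
Lemma phi_br f g : inI f -> inI g ->
  forall u v, phi (ibracket f g) u v = ibracket (phi f) (phi g) u v.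
Proof. case: Hphi => H1 H2 H3 H4 H5; exact: H5. Qed.

Lemma inI0 : inI (fun _ _ : X => 0 : K). Proof. by []. Qed.

Lemma phi0 u v : phi (fun _ _ => 0) u v = 0.
Proof.
have := phi_lin 1 inI0 inI0 u v.
have -> : (fun a b : X => 1 * 0 + 0) = (fun _ _ => 0 : K).
  by do 2 (apply: functional_extensionality => ?); rewrite mulr0 addr0.
rewrite mul1r => h; apply: (addrI (phi (fun _ _ => 0) u v)); by rewrite addr0 -h.
Qed.

Lemma phiZ c f : inI f -> forall u v, phi (fun a b => c * f a b) u v = c * phi f u v.
Proof.
move=> hf u v; have := phi_lin c hf inI0 u v.
have -> : (fun a b : X => c * f a b + 0) = (fun a b => c * f a b).
  by do 2 (apply: functional_extensionality => ?); rewrite addr0.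
by rewrite phi0 addr0.
Qed.

Lemma phi_sum (I : Type) (s : seq I) (P : pred I) (c : I -> K) (F : I -> X -> X -> K) :
  (forall i, P i -> inI (F i)) -> forall u v,
  phi (fun a b => \sum_(i <- s | P i) c i * F i a b) u v
  = \sum_(i <- s | P i) c i * phi (F i) u v.
Proof.
move=> hF u v; elim: s => [|i s IH].
  have -> : (fun a b : X => \sum_(i <- [::] | P i) c i * F i a b) = (fun _ _ => 0 : K).
    by do 2 (apply: functional_extensionality => ?); rewrite big_nil.
  by rewrite phi0 big_nil.
rewrite big_cons; case Pi: (P i).
  have -> : (fun a b : X => \sum_(j <- i :: s | P j) c j * F j a b)
     = (fun a b => c i * F i a b + (fun a b => \sum_(j <- s | P j) c j * F j a b) a b).
    by do 2 (apply: functional_extensionality => ?); rewrite big_cons Pi.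
  by rewrite phi_lin ?IH //; [apply: hF | apply: inI_sum].
have -> : (fun a b : X => \sum_(j <- i :: s | P j) c j * F j a b)
     = (fun a b => \sum_(j <- s | P j) c j * F j a b).
  by do 2 (apply: functional_extensionality => ?); rewrite big_cons Pi.
exact: IH.
Qed.

Lemma phiJ1 (x y : X) : (x < y)%O -> Jk 1 (phi (e K x y)).
Proof.
move=> xy.
have E : e K x y = ibracket (e K x x) (e K x y).
  rewrite bracket_e_diag ?(ltW xy) // eqxx (lt_eqF xy) /=.
  by do 2 (apply: functional_extensionality => ?); rewrite ?mulr1n ?mulr0n subr0 mul1r.
have i1 := e_inI (lexx x); have i2 := e_inI (ltW xy).
move=> p q hpq; rewrite E phi_br //.
case: (eqVneq p q) => [<-|npq]; first exact: ibracket_diag.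
case pq: (p <= q)%O.
  have : (p < q)%O by rewrite lt_neqAle npq pq.
  by move/ilen_lt; lia.
by rewrite inI_ibracket ?pq.
Qed.

Lemma phiJ k (x y : X) : (1 <= k)%N -> (k <= ilen x y)%N -> Jk k (phi (e K x y)).
Proof.
elim: k x y => [//|k IH] x y k1 hk.
have xy : (x < y)%O by apply: ilen_pos_lt; lia.
case: (posnP k) => [k0 | kpos]; first by subst k; exact: phiJ1.
have [z [xz zy hkz]] := ilen_split kpos hk.
have E : e K x y = ibracket (e K x z) (e K z y).
  by rewrite bracket_e_chain ?(ltW zy) // (lt_eqF xy).
have i1 := e_inI xz; have i2 := e_inI (ltW zy).
move=> p q hpq; rewrite E phi_br //.
by apply: (ibracket_J (IH x z kpos hkz) (phiJ1 zy)); rewrite addn1.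
Qed.

Lemma phiJ' k f : (1 <= k)%N -> inI f -> Jk k f -> Jk k (phi f).
Proof.
move=> k1 hf Jf p q hpq.
rewrite (expand hf) phi_sum; last by move=> pq /= h; apply: e_inI.
rewrite big1 // => pq _.
case: (ltnP (ilen pq.1 pq.2) k) => h; first by rewrite Jf // mul0r.
by rewrite (phiJ k1 h) // mulr0.
Qed.

End Phi.


Lemma inI_lin c f g : inI f -> inI g -> inI (fun a b => c * f a b + g a b).
Proof. by move=> hf hg u v nuv; rewrite hf // hg // mulr0 addr0. Qed.

Definition psi_of (phi : (X -> X -> K) -> (X -> X -> K)) (g : X -> X -> K) : X -> X -> K :=
  epsilon (inhabits (fun _ _ => 0)) (fun f => inI f /\ forall u v, phi f u v = g u v).

Section Psi.
Variable phi : (X -> X -> K) -> (X -> X -> K).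
Hypothesis Hphi : lie_automorphism phi.
Local Notation psi := (psi_of phi).

Lemma psi_spec g : inI g -> inI (psi g) /\ forall u v, phi (psi g) u v = g u v.
Proof.
move=> hg.
have H := (epsilon_spec (inhabits (fun _ _ : X => 0 : K))
  (fun f => inI f /\ forall u v, phi f u v = g u v)).
apply: H.
by have [f hf hfg] := phi_surj Hphi hg; exists f.
Qed.

Lemma psi_fun g : inI g -> phi (psi g) = g.
Proof.
move=> hg; have [_ h] := psi_spec hg.
by do 2 (apply: functional_extensionality => ?); apply: h.
Qed.

Lemma psi_phi f : inI f -> forall u v, psi (phi f) u v = f u v.
Proof.
move=> hf; have hpf := phi_inI Hphi hf.
have [h1 h2] := psi_spec hpf.
exact: (phi_inj Hphi h1 hf).
Qed.

Lemma psi_lie : lie_automorphism psi.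
Proof.
split.
- by move=> f hf; have [] := psi_spec hf.
- move=> c f g hf hg u v.
  have [hf1 hf2] := psi_spec hf; have [hg1 hg2] := psi_spec hg.
  have hl := inI_lin c hf hg.
  have [hl1 hl2] := psi_spec hl.
  apply: (phi_inj Hphi hl1 (inI_lin c hf1 hg1)).
  by move=> a b; rewrite hl2 (phi_lin Hphi) // hf2 hg2.
- move=> f g hf hg heq u v.
  have E : psi f = psi g by do 2 (apply: functional_extensionality => ?); apply: heq.
  by rewrite -(psi_fun hf) E psi_fun.
- move=> g hg; exists (phi g); first exact: phi_inI.
  exact: psi_phi.
- move=> f g hf hg u v.
  have [hf1 hf2] := psi_spec hf; have [hg1 hg2] := psi_spec hg.
  have hb := inI_ibracket f g.
  have [hb1 hb2] := psi_spec hb.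
  apply: (phi_inj Hphi hb1 (inI_ibracket _ _)).
  by move=> a b; rewrite hb2 (phi_br Hphi) // !psi_fun.
Qed.

End Psi.


Lemma ilen_refl (p : X) : ilen p p = 0%N.
Proof. by apply/eqP; rewrite -leqn0 leqNgt; apply/negP => /ilen_pos_lt; rewrite ltxx. Qed.

Lemma pair_det (p q p' q' : X) : (p < q)%O -> (p' < q')%O ->
  (forall a : X, (p == a)%:R - (q == a)%:R = (p' == a)%:R - (q' == a)%:R :> K) ->
  p = p' /\ q = q'.
Proof.
move=> pq pq' H.
have npq : (p == q) = false by rewrite (lt_eqF pq).
have npq' : (p' == q') = false by rewrite (lt_eqF pq').
have o0 : (1 : K) != 0 by exact: oner_neq0.
case: (eqVneq p p') => [pp'|npp'].
  subst p'; split => //; apply/eqP; apply/negPn/negP => nqq'.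
  have := H q; rewrite npq eqxx (eq_sym q') (negbTE nqq') /= ?mulr0n ?mulr1n sub0r subr0.
  by move/eqP; rewrite oppr_eq0 ?mulr1n (negbTE o0).
exfalso.
have e1 : (q == p) = false by rewrite eq_sym npq.
have e2 : (p' == p) = false by rewrite eq_sym (negbTE npp').
have hp := H p; rewrite eqxx e1 e2 /= ?mulr0n ?mulr1n subr0 sub0r in hp.
case: (eqVneq q' p) => [qp|nqp]; last first.
  by move: hp; rewrite (negbTE nqp) /= ?mulr0n oppr0 => /eqP; rewrite (negbTE o0).
have hp' := H p'; rewrite eqxx (eq_sym q') npq' (negbTE npp') /= ?mulr0n ?mulr1n subr0 sub0r in hp'.
case: (eqVneq q p') => [qp'|nqp']; last first.
  by move: hp'; rewrite (negbTE nqp') /= ?mulr0n oppr0 => /eqP; rewrite eq_sym (negbTE o0).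
by move: pq; rewrite qp' => /lt_trans /(_ pq'); rewrite qp ltxx.
Qed.

Section Main.
Variable phi : (X -> X -> K) -> (X -> X -> K).
Hypothesis Hphi : lie_automorphism phi.
Local Notation h x := (phi (e K x x)).

Lemma comb (a : X) : exists c : X -> K, forall b, \sum_x c x * h x b b = (b == a)%:R.
Proof.
have [hf1 hf2] := psi_spec Hphi (e_inI (lexx a)).
set f := psi_of phi (e K a a) in hf1 hf2.
exists (fun x => f x x) => b.
have -> : (b == a)%:R = e K a a b b :> K by rewrite /e andbb; case: (b == a).
rewrite -hf2 {2}(expand hf1) (phi_sum Hphi); last by move=> pq /= h; apply: e_inI.
rewrite (eq_bigl (fun pq : X * X => xpredT pq.1 && (pq.1 <= pq.2)%O)) //.
rewrite -(pair_big_dep xpredT (fun i j => (i <= j)%O) (fun i j => f i j * phi (e K i j) b b)).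
apply: eq_bigr => x _; rewrite (bigD1 x) ?lexx //= big1 ?addr0 // => y /andP[xy nyx].
have xy' : (x < y)%O by rewrite lt_neqAle eq_sym nyx xy.
by rewrite (phiJ1 Hphi xy') ?ilen_refl // mulr0.
Qed.

Definition sg (p q x : X) : K := h x p p - h x q q.

Lemma comb_det (p q p' q' : X) : (p < q)%O -> (p' < q')%O ->
  (forall x, sg p q x = sg p' q' x) -> p = p' /\ q = q'.
Proof.
move=> pq pq' H; apply: pair_det => // a.
have [c hc] := comb a.
have E : forall r s, \sum_x c x * sg r s x = (r == a)%:R - (s == a)%:R.
  by move=> r s; rewrite -!hc -sumrB; apply: eq_bigr => x _; rewrite /sg mulrBr.
by rewrite -!E; apply: eq_bigr => x _; rewrite H.
Qed.

Lemma eigen (u v p q : X) : (u < v)%O -> ilen p q = ilen u v ->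
  phi (e K u v) p q != 0 -> forall x, sg p q x = (x == u)%:R - (x == v)%:R.
Proof.
move=> uv hl gnz x.
set l := ilen u v in hl.
have l1 : (1 <= l)%N by apply: ilen_lt.
have Jg : Jk l (phi (e K u v)) by apply: phiJ.
have pq : (p < q)%O by apply: ilen_pos_lt; lia.
have E := bracket_e_diag x (ltW uv).
have i1 := e_inI (lexx x); have i2 := e_inI (ltW uv).
have H : phi (ibracket (e K x x) (e K u v)) p q = ((x == u)%:R - (x == v)%:R) * phi (e K u v) p q.
  by rewrite E (phiZ Hphi).
rewrite (phi_br Hphi) // in H.
have Hh : inI (h x) by apply: (phi_inI Hphi); apply: e_inI.
have m1 : imul (h x) (phi (e K u v)) p q = h x p p * phi (e K u v) p q.
  rewrite /imul (bigD1 p) ?lexx ?(ltW pq) //= big1 ?addr0 // => t /andP[/andP[pt tq] ntp].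
  have pt' : (p < t)%O by rewrite lt_neqAle eq_sym ntp pt.
  have := ilen_add pt tq; have := ilen_lt pt'.
  case: (ltnP (ilen t q) l) => ht; first by rewrite Jg // mulr0.
  lia.
have m2 : imul (phi (e K u v)) (h x) p q = phi (e K u v) p q * h x q q.
  rewrite /imul (bigD1 q) ?lexx ?(ltW pq) //= big1 ?addr0 // => t /andP[/andP[pt tq] ntq].
  have tq' : (t < q)%O by rewrite lt_neqAle ntq tq.
  have := ilen_add pt tq; have := ilen_lt tq'.
  case: (ltnP (ilen p t) l) => ht; first by rewrite Jg // mul0r.
  lia.
move: H; rewrite /ibracket m1 m2 [_ * h x q q]mulrC -mulrBl.
by move/(mulIf gnz).
Qed.


Definition theta (pq : X * X) : X * X :=
  if (pq.1 < pq.2)%O then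
    odflt pq [pick r : X * X | (ilen r.1 r.2 == ilen pq.1 pq.2) && (phi (e K pq.1 pq.2) r.1 r.2 != 0)]
  else pq.

Lemma theta_spec (u v : X) : (u < v)%O ->
  ilen (theta (u, v)).1 (theta (u, v)).2 = ilen u v /\ phi (e K u v) (theta (u, v)).1 (theta (u, v)).2 != 0.
Proof.
move=> uv; rewrite /theta /= uv.
case: pickP => [r /andP[/eqP -> ->] //| none] /=.
exfalso.
set l := ilen u v.
have l1 : (1 <= l)%N by apply: ilen_lt.
have Jg : Jk l.+1 (phi (e K u v)).
  move=> p q hpq; case: (ltnP (ilen p q) l) => h; first by apply: (phiJ Hphi l1).
  have /eqP epq : ilen p q == l by rewrite eqn_leq h; lia.
  have := none (p, q); rewrite /= epq eqxx /= => /negbFE /eqP //.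
have hi : inI (phi (e K u v)) by apply: (phi_inI Hphi); apply: e_inI; apply: ltW.
have := phiJ' (psi_lie Hphi) (isT : (1 <= l.+1)%N) hi Jg (ltnSn l : (ilen u v < l.+1)%N).
have iE := e_inI (ltW uv); rewrite (psi_phi Hphi iE) /e !eqxx /= => /eqP; rewrite oner_eq0.
by [].
Qed.

Lemma theta_lt (u v : X) : (u < v)%O -> ((theta (u, v)).1 < (theta (u, v)).2)%O.
Proof.
move=> uv; have [h1 _] := theta_spec uv; apply: ilen_pos_lt; rewrite h1.
exact: ilen_lt.
Qed.

Lemma theta_uniq (u v p q : X) : (u < v)%O -> ilen p q = ilen u v ->
  phi (e K u v) p q != 0 -> (p, q) = theta (u, v).
Proof.
move=> uv hl nz; have [h1 h2] := theta_spec uv.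
have pq : (p < q)%O by apply: ilen_pos_lt; rewrite hl; exact: ilen_lt.
have [-> ->] := comb_det pq (theta_lt uv) (fun x => etrans (eigen uv hl nz x) (esym (eigen uv h1 h2 x))).
by case: (theta (u, v)).
Qed.

Lemma theta_inj (u v u' v' : X) : (u < v)%O -> (u' < v')%O -> theta (u, v) = theta (u', v') ->
  u = u' /\ v = v'.
Proof.
move=> uv uv' E; have [h1 h2] := theta_spec uv; have [h1' h2'] := theta_spec uv'.
apply: pair_det => // a.
have e1 := eigen uv h1 h2 a; have e2 := eigen uv' h1' h2' a.
rewrite E in e1; rewrite !(eq_sym _ a) -e1 -e2 //.
Qed.

End Main.

End L.

Unset Implicit Arguments.

(* theta : B -> B is encoded as a map on pairs (x,y) with x < y,
   theta(e_xy) = e_{theta(x,y)}; sigma : X^2_< -> K^* as a function nonzero on x < y. *)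
Theorem lemma4p3 (d : Order.disp_t) (X : finPOrderType d) (K : fieldType)
  (phi : (X -> X -> K) -> (X -> X -> K)) :
  connected_poset X ->
  lie_automorphism phi ->
  exists (theta : X * X -> X * X) (sigma : X -> X -> K),
    [/\ (* theta maps B into B *)
        (forall p : X * X, p.1 < p.2 -> (theta p).1 < (theta p).2),
        (* theta is injective on B *)
        (forall p q : X * X, p.1 < p.2 -> q.1 < q.2 -> theta p = theta q -> p = q),
        (* theta is surjective onto B *)
        (forall q : X * X, q.1 < q.2 -> exists2 p : X * X, p.1 < p.2 & theta p = q),
        (* theta(B_i) subset B_i for all i >= 1 *)
        (forall (i : nat) (p : X * X), (1 <= i)%N -> p.1 < p.2 ->
            (i <= ilen p.1 p.2)%N -> (i <= ilen (theta p).1 (theta p).2)%N)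
      & (* sigma takes values in K^* *)
        ((forall x y : X, x < y -> sigma x y != 0%R) /\
        (* tilde phi (e_xy) = sigma(x,y) theta(e_xy) *)
        (forall x y : X, x < y -> forall u v : X,
            phi_tilde phi x y u v = (sigma x y * e K (theta (x, y)).1 (theta (x, y)).2 u v)%R))].
Proof.
move=> _ Hphi.
pose th := theta phi.
have inj : forall p q : X * X, p.1 < p.2 -> q.1 < q.2 -> th p = th q -> p = q.
  move=> [u v] [u' v'] /= uv uv' E.
  by have [-> ->] := theta_inj Hphi uv uv' E.
have tlt : forall p : X * X, p.1 < p.2 -> (th p).1 < (th p).2.
  by move=> [u v] /= uv; apply: theta_lt.
exists th, (fun x y => phi (e K x y) (th (x, y)).1 (th (x, y)).2); split => //.
- move=> q qB.
  pose B := [set r : X * X | r.1 < r.2].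
  have sub : th @: B \subset B.
    by apply/subsetP => r /imsetP[p]; rewrite !inE => pB ->; apply: tlt.
  have cd : #|th @: B| = #|B|.
    by apply: card_in_imset => p1 p2; rewrite !inE; apply: inj.
  have /subset_cardP /(_ sub) eqB := cd.
  have : q \in th @: B by rewrite eqB inE.
  by case/imsetP => p; rewrite inE => pB ->; exists p.
- move=> i [u v] /= _ uv hi.
  by have [-> _] := theta_spec Hphi uv.
- split.
    by move=> x y xy; have [_ ->] := theta_spec Hphi xy.
  move=> x y xy u v.
  have [h1 h2] := theta_spec Hphi xy.
  rewrite /phi_tilde /Lcomp /e.
  case: (eqVneq u (th (x, y)).1) => [ur|nur]; case: (eqVneq v (th (x, y)).2) => [vr|nvr] /=;
    rewrite ?mulr1 ?mulr0.
  + by rewrite ur vr h1 eqxx.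
  + case: eqP => // hl; apply/eqP; apply/negPn/negP => nz.
    have := theta_uniq Hphi xy hl nz; rewrite -/th => E.
    by move: nvr; rewrite -E eqxx.
  + case: eqP => // hl; apply/eqP; apply/negPn/negP => nz.
    have := theta_uniq Hphi xy hl nz; rewrite -/th => E.
    by move: nur; rewrite -E eqxx.
  + case: eqP => // hl; apply/eqP; apply/negPn/negP => nz.
    have := theta_uniq Hphi xy hl nz; rewrite -/th => E.
    by move: nur; rewrite -E eqxx.
Qed.
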